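(* Let $E$ be a strictly convex and reflexive Banach space, let $C\neq\emptyset$ be a closed convex subset of $E$, and let $\mathcal{S}=\{T_s: s\in S\}$ be a representation of a semigroup $S$ on $C$. If $A_C(\mathcal{S})\neq\emptyset$, then $F(\mathcal{S})\neq\emptyset$.
   Context: A representation of a semigroup $S$ on a set $C$ is a family $\{T_s:s\in S\}$ of maps $T_s:C\to C$ with $T_{st}=T_s\circ T_t$ for all $s,t\in S$ (no continuity or nonexpansiveness is assumed). A point $a\in E$ is an attractive point of $\mathcal{S}$ for $C$ if $\|a-T_sx\|\le\|a-x\|$ for all $x\in C$ and all $s\in S$; $A_C(\mathcal{S})$ denotes the set of all such points. $F(\mathcal{S})$ denotes the set of common fixed points, i.e. $x\in C$ with $T_sx=x$ for all $s\in S$. *)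

(* Defs.v *)
From HB Require Import structures.
From mathcomp Require Import all_boot all_order all_algebra.
From mathcomp Require Import all_classical all_reals topology normedtype.
Set Implicit Arguments. Unset Strict Implicit. Unset Printing Implicit Defensive.
Import Order.TTheory GRing.Theory Num.Theory.
Import numFieldNormedType.Exports.
Local Open Scope classical_set_scope.
Local Open Scope ring_scope.

Section Defs.
Context {R : realType} {E : normedModType R}.

Definition dual_elt (f : E -> R) : Prop :=
  [/\ (forall x y, f (x + y) = f x + f y),
      (forall (a : R) x, f (a *: x) = a * f x) & continuous f].

Definition opnorm_le (f : E -> R) (c : R) : Prop :=
  forall x, `|f x| <= c * `|x|.

Definition bidual_elt (Phi : (E -> R) -> R) : Prop :=
  [/\ (forall f g, dual_elt f -> dual_elt g -> Phi (f \+ g) = Phi f + Phi g),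
      (forall (a : R) f, dual_elt f -> Phi (fun x => a * f x) = a * Phi f) &
      exists M : R, forall f c, dual_elt f -> 0 <= c -> opnorm_le f c ->
        `|Phi f| <= M * c].

(* reflexive: the canonical embedding E -> E** is surjective *)
Definition reflexive_space : Prop :=
  forall Phi, bidual_elt Phi -> exists x : E, forall f, dual_elt f -> Phi f = f x.

Definition strictly_convex_space : Prop :=
  forall x y : E, `|x| = 1 -> `|y| = 1 -> x <> y -> `|(2%:R^-1) *: (x + y)| < 1.

Definition convex_subset (C : set E) : Prop :=
  forall x y, C x -> C y -> forall t : R, 0 <= t <= 1 -> C (t *: x + (1 - t) *: y).

Definition semigroup_op {S : Type} (op : S -> S -> S) : Prop :=
  forall s t u, op s (op t u) = op (op s t) u.

Definition representation {S : Type} (op : S -> S -> S) (C : set E)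
  (T : S -> E -> E) : Prop :=
  (forall s x, C x -> C (T s x)) /\
  (forall s t x, C x -> T (op s t) x = T s (T t x)).

Definition attractive_points {S : Type} (C : set E) (T : S -> E -> E) : set E :=
  [set a | forall x s, C x -> `|a - T s x| <= `|a - x|].

Definition common_fixed_points {S : Type} (C : set E) (T : S -> E -> E) : set E :=
  [set x | C x /\ forall s, T s x = x].
End Defs.

(* Main.v *)
Require Import Defs.
From HB Require Import structures.
From mathcomp Require Import all_boot all_order all_algebra.
From mathcomp Require Import all_classical all_reals topology normedtype.
From mathcomp Require Import ring lra.
Set Implicit Arguments. Unset Strict Implicit. Unset Printing Implicit Defensive.
Import Order.TTheory GRing.Theory Num.Theory.
Import numFieldNormedType.Exports.
Local Open Scope classical_set_scope.
Local Open Scope ring_scope.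
Section Inf.
Variable R : realType.
Lemma infL (E : set R) m e : (forall y, E y -> m <= y) -> E e -> inf E <= e.
Proof. move=> lb Ee; apply: ge_inf => //; by exists m. Qed.
Lemma infG (E : set R) x : E !=set0 -> (forall y, E y -> x <= y) -> x <= inf E.
Proof. by move=> ne lb; apply: lb_le_inf. Qed.
Lemma infA (E : set R) m eps : 0 < eps -> E !=set0 -> (forall y, E y -> m <= y) ->
  exists2 e, E e & e < inf E + eps.
Proof. by move=> e0 ne lb; apply: inf_adherent => //; split => //; exists m. Qed.
End Inf.
Section HB.
Variables (R : realType) (V : lmodType R).
Definition sublin (q : V -> R) :=
  (forall x y, q (x + y) <= q x + q y) /\ (forall t x, 0 <= t -> q (t *: x) = t * q x).

Lemma sublin0 q : sublin q -> q 0 = 0.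
Proof. by case=> _ h; rewrite -(scale0r (0:V)) h // mul0r. Qed.

Lemma sublinN q x : sublin q -> - q (- x) <= q x.
Proof.
move=> hq; have := hq.1 x (- x); rewrite subrr sublin0 //; lra.
Qed.

Lemma sublin_intro q : (forall x y, q (x + y) <= q x + q y) -> q 0 = 0 ->
  (forall s x, 0 < s -> s * q x <= q (s *: x)) -> sublin q.
Proof.
move=> hadd h0 hs; split => // t x; rewrite le0r => /orP[/eqP->|t0].
  by rewrite scale0r mul0r.
apply/eqP; rewrite eq_le hs // andbT.
have := hs t^-1 (t *: x); rewrite invr_gt0 => /(_ t0).
by rewrite scalerA mulVf ?gt_eqF // scale1r ler_pdivrMl // mulrC.
Qed.

Definition shift (q : V -> R) (x y : V) : R :=
  inf [set q (y + t *: x) - t * q x | t in [set t : R | 0 <= t]].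

Variable q : V -> R.
Hypothesis hq : sublin q.

Lemma shift_lb x y t : 0 <= t -> - q (- y) <= q (y + t *: x) - t * q x.
Proof.
move=> t0; have := hq.1 (y + t *: x) (- y).
rewrite addrAC subrr add0r (hq.2 _ _ t0); lra.
Qed.

Lemma shift_ne x y : [set q (y + t *: x) - t * q x | t in [set t : R | 0 <= t]] !=set0.
Proof. by exists (q (y + 0 *: x) - 0 * q x); exists 0 => //=. Qed.

Lemma shift_le x y t : 0 <= t -> shift q x y <= q (y + t *: x) - t * q x.
Proof.
move=> t0; apply: (@infL _ _ (- q (- y))); last by exists t.
by move=> _ [s s0 <-]; apply: shift_lb.
Qed.

Lemma shift_le_q x y : shift q x y <= q y.
Proof. by have := @shift_le x y 0 (lexx _); rewrite scale0r addr0 mul0r subr0. Qed.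

Lemma shift_lbd x y : - q (- y) <= shift q x y.
Proof. by apply: infG; [exact: shift_ne| move=> _ [s s0 <-]; apply: shift_lb]. Qed.

Lemma shift_approx x y eps : 0 < eps ->
  exists2 t, 0 <= t & q (y + t *: x) - t * q x < shift q x y + eps.
Proof.
move=> e0; have [] := @infA _ _ (- q (- y)) _ e0 (shift_ne x y).
  by move=> _ [s s0 <-]; apply: shift_lb.
by move=> _ [t t0 <-] h; exists t.
Qed.
End HB.
Section HB2.
Variables (R : realType) (V : lmodType R).
Variable q : V -> R.
Hypothesis hq : sublin q.

Lemma shift_sublin x : sublin (shift q x).
Proof.
apply: sublin_intro.
- move=> y1 y2; apply/ler_addgt0Pr => e e0.
  have e20 : 0 < e / 2 by rewrite divr_gt0.
  have [t1 t10 h1] := shift_approx hq x y1 e20.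
  have [t2 t20 h2] := shift_approx hq x y2 e20.
  have := shift_le hq x (y1 + y2) (addr_ge0 t10 t20).
  have := hq.1 (y1 + t1 *: x) (y2 + t2 *: x).
  rewrite addrACA -scalerDl.
  have : e = e / 2 + e / 2 by rewrite -splitr.
  lra.
- apply/eqP; rewrite eq_le; apply/andP; split.
    by have := shift_le_q hq x 0; rewrite (sublin0 hq).
  have := shift_lbd hq x 0; rewrite oppr0 (sublin0 hq); lra.
- move=> s y s0; apply: infG; first exact: shift_ne.
  move=> _ [t t0 <-].
  have ts0 : 0 <= t / s by rewrite divr_ge0 // ltW.
  have := shift_le hq x y ts0.
  have -> : s *: y + t *: x = s *: (y + (t / s) *: x).
    by rewrite scalerDr scalerA mulrCA mulfV ?gt_eqF // mulr1.
  rewrite (hq.2 _ _ (ltW s0)).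
  have -> : t * q x = s * ((t / s) * q x).
    by rewrite mulrA mulrCA mulfV ?gt_eqF // mulr1.
  rewrite -mulrBr => h; rewrite ler_pM2l //.
Qed.
End HB2.
Section HB3.
Variables (R : realType) (V : lmodType R).

Lemma min_linear (q : V -> R) : sublin q ->
  (forall r, sublin r -> (forall v, r v <= q v) -> r = q) ->
  (forall x y, q (x + y) = q x + q y) /\ (forall t x, q (t *: x) = t * q x).
Proof.
move=> hq hmin.
have hadd x y : q (x + y) = q x + q y.
  apply/eqP; rewrite eq_le hq.1 /=.
  have e := hmin _ (shift_sublin hq x) (shift_le_q hq x).
  have := shift_le hq x y ler01; rewrite e scale1r mul1r [y + x]addrC; lra.
split => // t x.
have hN : q (- x) = - q x.
  have := hadd x (- x); rewrite subrr (sublin0 hq); lra.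
have [t0|t0] := leP 0 t; first exact: hq.2.
have -> : t *: x = (- t) *: (- x) by rewrite scaleNr scalerN opprK.
rewrite hq.2 ?hN; last by rewrite oppr_ge0 ltW.
by rewrite mulrNN.
Qed.

Lemma minimal_exists (p0 : V -> R) : sublin p0 -> exists q, sublin q /\
  (forall v, q v <= p0 v) /\ (forall r, sublin r -> (forall v, r v <= q v) -> r = q).
Proof.
move=> hp0.
pose T := {q : V -> R | sublin q /\ (forall v, q v <= p0 v)}.
pose Rl (a b : T) := `[< forall v, sval b v <= sval a v >].
have := @Zorn T Rl.
case.
- by move=> a; apply/asboolP => v.
- move=> a b c /asboolP hab /asboolP hbc; apply/asboolP => v.
  exact: le_trans (hbc v) (hab v).
- move=> [a ha] [b hb] /asboolP hab /asboolP hba /=.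
  have eab : a = b by apply: funext => v; apply/eqP; rewrite eq_le hab hba.
  subst b; congr exist; exact: Prop_irrelevance.
- move=> A Atot.
  have [[a0 Aa0]|A0] := pselect (A !=set0); last first.
    exists (exist _ p0 (conj hp0 (fun v => lexx _))) => s As.
    by exfalso; apply: A0; exists s.
  pose qi v := inf [set sval a v | a in A].
  have lbi v : forall y, [set sval a v | a in A] y -> - p0 (- v) <= y.
    move=> _ [a Aa <-]; apply: le_trans (sublinN v (proj1 (svalP a))).
    by rewrite lerN2; apply: (proj2 (svalP a)).
  have nei v : [set sval a v | a in A] !=set0 by exists (sval a0 v); exists a0.
  have qiL a v : A a -> qi v <= sval a v.
    by move=> Aa; apply: (infL (lbi v)); exists a.
  have hqi : sublin qi.
    apply: sublin_intro.
    + move=> x y; apply/ler_addgt0Pr => e e0.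
      have e20 : 0 < e / 2 by rewrite divr_gt0.
      have [_ [a1 Aa1 <-] h1] := infA e20 (nei x) (lbi x).
      have [_ [a2 Aa2 <-] h2] := infA e20 (nei y) (lbi y).
      have : e = e / 2 + e / 2 by rewrite -splitr.
      have [c [Ac c1 c2]] : exists c, [/\ A c, sval c x <= sval a1 x & sval c y <= sval a2 y].
        have [/asboolP h|/asboolP h] := Atot _ _ Aa1 Aa2.
          by exists a2; split => //; apply: h.
        by exists a1; split => //; apply: h.
      have := qiL c (x + y) Ac.
      have := (proj1 (svalP c)).1 x y.
      lra.
    + apply/eqP; rewrite eq_le; apply/andP; split.
        by have := qiL a0 0 Aa0; rewrite (sublin0 (proj1 (svalP a0))).
      apply: infG => // _ [a Aa <-]; by rewrite (sublin0 (proj1 (svalP a))).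
    + move=> s x s0; apply: infG => // _ [a Aa <-].
      rewrite (proj1 (svalP a)).2 ?(ltW s0) // ler_pM2l //; exact: qiL.
  have qip v : qi v <= p0 v.
    by apply: le_trans (qiL a0 v Aa0) _; apply: (proj2 (svalP a0)).
  exists (exist _ qi (conj hqi qip)) => s As; apply/asboolP => v /=.
  exact: qiL.
- move=> t tmin; exists (sval t); split; first exact: (proj1 (svalP t)).
  split; first exact: (proj2 (svalP t)).
  move=> r hr rq.
  have rp : forall v, r v <= p0 v.
    by move=> v; apply: le_trans (rq v) _; apply: (proj2 (svalP t)).
  have := tmin (exist _ r (conj hr rp)).
  by move=> /(_ (asboolT rq)) <-.
Qed.

Theorem hahn_banach (p : V -> R) (x0 : V) : sublin p -> exists f : V -> R,
  [/\ (forall x y, f (x + y) = f x + f y), (forall t x, f (t *: x) = t * f x),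
      (forall v, f v <= p v) & f x0 = p x0].
Proof.
move=> hp.
have [q [hq [qp qmin]]] := minimal_exists (shift_sublin hp x0).
have [hadd hsc] := min_linear hq qmin.
exists q; split => //.
  by move=> v; apply: le_trans (qp v) (shift_le_q hp x0 v).
apply/eqP; rewrite eq_le; apply/andP; split.
  by apply: le_trans (qp x0) (shift_le_q hp x0 x0).
have := qp (- x0); have := shift_le hp x0 (- x0) ler01.
rewrite scale1r addNr (sublin0 hp) mul1r.
have := hsc (-1) x0; rewrite scaleN1r; lra.
Qed.
End HB3.
Section T. Variables (R : realType) (E : normedModType R).
Lemma away (K : set E) x : closed K -> ~ K x -> exists2 e : R, 0 < e & forall k, K k -> e <= `|x - k|.
Proof.
move=> cK nKx.
have : nbhs x (~` K) by apply: open_nbhs_nbhs; split => //; exact: closed_openC.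
move=> /nbhs_ballP [e e0 he]; exists e => // k Kk.
rewrite leNgt; apply/negP => hk; apply: (he k) => //.
by rewrite -ball_normE /ball_ /=.
Qed.
Lemma cont_bounded (f : E -> R) c : (forall x y, f (x + y) = f x + f y) ->
  (forall t x, f (t *: x) = t * f x) -> 0 <= c -> (forall v, `|f v| <= c * `|v|) -> continuous f.
Proof.
move=> fa fs c0 fb z; apply/cvgrPdist_lt => eta eta0.
have fB a b : f (a - b) = f a - f b.
  by rewrite fa -scaleN1r fs mulN1r.
have h : 0 < eta / (c + 1) by rewrite divr_gt0 // ltr_wpDl.
near=> t.
rewrite -fB; apply: le_lt_trans (fb _) _.
have : `|z - t| < eta / (c + 1).
  near: t. exact: (@cvgr_dist_lt _ _ _ (nbhs z) _ id z (@cvg_id _ _) _ h).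
rewrite ltr_pdivlMr ?ltr_wpDl // => h2.
apply: le_lt_trans h2; by rewrite mulrDr mulr1 ler_wpDr // mulrC.
Unshelve. all: by end_near.
Qed.
Lemma convex_comb_id (t1 t2 : R) (k1 k2 y0 : E) : 0 < t1 + t2 ->
  (t1 + t2) *: ((t1 / (t1 + t2)) *: k1 + (1 - t1 / (t1 + t2)) *: k2 - y0)
  = t1 *: (k1 - y0) + t2 *: (k2 - y0).
Proof.
move=> s0.
have c1 : (t1 + t2) * (t1 / (t1 + t2)) = t1 by rewrite mulrCA mulfV ?gt_eqF // mulr1.
have c2 : (t1 + t2) * (1 - t1 / (t1 + t2)) = t2 by rewrite mulrBr mulr1 c1 addrAC subrr add0r.
rewrite scalerBr scalerDr !scalerA c1 c2 scalerDl !scalerBr.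
by rewrite opprD addrACA.
Qed.

Lemma separation (K : set E) x y0 : convex_subset K -> closed K -> K y0 -> ~ K x ->
  exists f, dual_elt f /\ exists g, g < f x /\ forall k, K k -> f k <= g.
Proof.
move=> cvK clK Ky0 nKx.
have [e e0 he] := away clK nKx.
pose eps := e / 2.
have eps0 : 0 < eps by rewrite divr_gt0.
have epse : eps < e by rewrite /eps ltr_pdivrMr // ltr_pMr // ltr1n.
pose G (v : E) := [set t : R | 0 < t /\ exists k, K k /\ `|v - t *: (k - y0)| <= t * eps].
pose g v := inf (G v).
have Glb v : forall t, G v t -> 0 <= t by move=> t [t0 _]; exact: ltW.
have Gmem v t : 0 < t -> `|v| <= t * eps -> G v t.
  by move=> t0 h; split => //; exists y0; split => //; rewrite subrr scaler0 subr0.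
have Gne v : G v !=set0.
  exists (`|v| / eps + 1); apply: Gmem.
    by rewrite ltr_wpDl // divr_ge0 // ltW.
  by rewrite mulrDl mul1r divfK ?gt_eqF // ler_wpDr // ltW.
have gle v : g v <= `|v| / eps.
  apply/ler_addgt0Pr => eta eta0; apply: (infL (Glb v)); apply: Gmem.
    by rewrite ltr_wpDl // divr_ge0 // ltW.
  by rewrite mulrDl divfK ?gt_eqF // ler_wpDr // mulr_ge0 // ltW.
have gge v : 0 <= g v by apply: infG => //; exact: Glb.
have hg : sublin g.
  apply: sublin_intro.
  - move=> v w; apply/ler_addgt0Pr => eta eta0.
    have e20 : 0 < eta / 2 by rewrite divr_gt0.
    have [t1 [t10 [k1 [Kk1 h1]]] a1] := infA e20 (Gne v) (Glb v).
    have [t2 [t20 [k2 [Kk2 h2]]] a2] := infA e20 (Gne w) (Glb w).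
    have s0 : 0 < t1 + t2 by rewrite addr_gt0.
    have : G (v + w) (t1 + t2).
      split => //; exists ((t1 / (t1 + t2)) *: k1 + (1 - t1 / (t1 + t2)) *: k2).
      split.
        apply: cvK => //; apply/andP; split; first by rewrite divr_ge0 // ltW.
        by rewrite ler_pdivrMr // mul1r ler_wpDr // ltW.
      rewrite convex_comb_id //.
      have -> : v + w - (t1 *: (k1 - y0) + t2 *: (k2 - y0)) =
        (v - t1 *: (k1 - y0)) + (w - t2 *: (k2 - y0)) by rewrite opprD addrACA.
      apply: le_trans (ler_normD _ _) _; rewrite mulrDl; exact: lerD.
    move=> /(infL (Glb (v + w))).
    have : eta = eta / 2 + eta / 2 by rewrite -splitr.
    rewrite -/(g v) -/(g w) -/(g (v + w)) in a1 a2 *.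
    lra.
  - apply/eqP; rewrite eq_le gge andbT.
    apply/ler_addgt0Pr => eta eta0; rewrite add0r.
    apply: (infL (Glb 0)); apply: Gmem => //.
    by rewrite normr0 mulr_ge0 // ltW.
  - move=> s v s0; apply: infG => // t [t0 [k [Kk hk]]].
    suff : g v <= t / s by rewrite ler_pdivlMr // mulrC.
    apply: (infL (Glb v)); split; first by rewrite divr_gt0.
    exists k; split => //.
    have -> : v - t / s *: (k - y0) = s^-1 *: (s *: v - t *: (k - y0)).
      by rewrite [RHS]scalerBr !scalerA mulVf ?gt_eqF // scale1r [s^-1 * t]mulrC.
    by rewrite normrZ gtr0_norm ?invr_gt0 // (mulrC t) -mulrA ler_pM2l ?invr_gt0.
pose x' := x - y0.
have gx1 : 1 <= g x'.
  rewrite leNgt; apply/negP => lt1.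
  have d0 : 0 < 1 - g x' by rewrite subr_gt0.
  have [t [t0 [k [Kk hk]]] ht] := infA d0 (Gne x') (Glb x').
  have t1 : t < 1 by move: ht; rewrite -/(g x'); lra.
  have Kz := cvK k y0 Kk Ky0 t.
  have /Kz Kz' : 0 <= t <= 1 by rewrite (ltW t0) (ltW t1).
  have := he _ Kz'.
  have -> : x - (t *: k + (1 - t) *: y0) = x' - t *: (k - y0).
    rewrite scalerBl scale1r scalerBr /x' !opprD !opprK !addrA.
    congr (_ + _); exact: addrAC.
  have : t * eps < 1 * eps by rewrite ltr_pM2r.
  move: hk epse; lra.
pose s := eps / (`|x'| + 1).
have s0 : 0 < s by rewrite divr_gt0 // ltr_wpDl.
have gk k : K k -> g (k - y0 + s *: x') <= 1.
  move=> Kk; apply: (infL (Glb _)); split => //; exists k; split => //.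
  rewrite scale1r addrAC subrr add0r normrZ gtr0_norm // mul1r.
  rewrite /s mulrAC ler_pdivrMr ?ltr_wpDl // ler_pM2l // lerDl //.
have [f [fa fs fle fx]] := hahn_banach x' hg.
have fB a b : f (a - b) = f a - f b by rewrite fa -scaleN1r fs mulN1r.
have fN a : f (- a) = - f a by rewrite -scaleN1r fs mulN1r.
exists f; split.
  split => //; apply: (@cont_bounded f eps^-1) => //; first by rewrite invr_ge0 ltW.
  move=> v; rewrite ler_norml; apply/andP; split.
    rewrite lerNl -fN; apply: le_trans (fle _) _; apply: le_trans (gle _) _.
    by rewrite normrN mulrC.
  by apply: le_trans (fle _) _; apply: le_trans (gle _) _; rewrite mulrC.
exists (f y0 + 1 - s); split.
  have -> : x = x' + y0 by rewrite /x' subrK.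
  rewrite fa fx; move: gx1 s0; lra.
move=> k Kk; have := le_trans (fle _) (gk k Kk).
rewrite fa fB fs fx.
have : s <= s * g x' by rewrite ler_peMr // ltW.
lra.
Qed.
End T.
Section Ultra.
Variable R : realType.
Variable U : set_system nat.
Hypothesis UU : UltraFilter U.

Lemma ultra_map (u : nat -> R) : UltraFilter (u @ U).
Proof.
split; first exact: fmap_proper_filter.
move=> G GF sG; rewrite predeqE => A; split; last exact: sG.
move=> GA; have [//|nU] := in_ultra_setVsetC (u @^-1` A) UU.
have GnA : G (~` A) by apply: sG.
by have /filter_ex [? []] : G (A `&` (~` A)) by exact: filterI.
Qed.

Definition ulim (u : nat -> R) := lim (u @ U).

Lemma ulim_cvg (u : nat -> R) M : (forall n, `|u n| <= M) -> u @ U --> ulim u.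
Proof.
move=> hM.
have UF : ProperFilter U by apply: ultra_proper.
have := @segment_compact R (- M) M.
rewrite compact_ultra => /(_ _ (ultra_map u)).
case.
  apply: (@filterS _ U _ setT); last exact: filterT.
  by move=> n _ /=; rewrite in_itv /= -ler_norml; exact: hM.
by move=> p [_ hp]; rewrite /ulim (cvg_lim _ hp).
Qed.

Lemma ulimD u v M N : (forall n, `|u n| <= M) -> (forall n, `|v n| <= N) ->
  ulim (fun n => u n + v n) = ulim u + ulim v.
Proof.
move=> hu hv; apply: cvg_lim => //.
exact: (cvgD (ulim_cvg hu) (ulim_cvg hv)).
Qed.

Lemma ulimZ u a M : (forall n, `|u n| <= M) -> ulim (fun n => a * u n) = a * ulim u.
Proof. by move=> hu; apply: cvg_lim => //; exact: (cvgMl_tmp (ulim_cvg hu)). Qed.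

Lemma ulim_le u M g : (forall n, `|u n| <= M) -> U [set n | u n <= g] -> ulim u <= g.
Proof.
move=> hu hg.
exact: (@closed_cvg _ _ _ _ u [set y | y <= g] (@closed_le _ g) hg _ (ulim_cvg hu)).
Qed.

Lemma ulim_abs u M : (forall n, `|u n| <= M) -> `|ulim u| <= M.
Proof.
have UF : ProperFilter U by apply: ultra_proper.
move=> hu; rewrite ler_norml; apply/andP; split.
  rewrite lerNl -mulN1r -(ulimZ _ hu); apply: (ulim_le (M := M)).
    by move=> n; rewrite normrM normrN1 mul1r.
  apply: (@filterS _ U _ setT); last exact: filterT.
  by move=> n _ /=; rewrite mulN1r lerNl; have := hu n; rewrite ler_norml => /andP[].
apply: (ulim_le hu); apply: (@filterS _ U _ setT); last exact: filterT.
by move=> n _ /=; have := hu n; rewrite ler_norml => /andP[].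
Qed.
End Ultra.
Section Main.
Variables (R : realType) (E : normedModType R).

Lemma dual_bounded (f : E -> R) : dual_elt f ->
  exists2 c, 0 <= c & forall v, `|f v| <= c * `|v|.
Proof.
case=> fa fs fc.
have f0 : f 0 = 0 by rewrite -(scale0r (0 : E)) fs mul0r.
have : nbhs (0 : E) [set t | `|f 0 - f t| < 1].
  exact: (@cvgr_dist_lt _ _ _ _ _ f (f 0) (fc 0) _ ltr01).
move=> /nbhs_ballP [del /= del0 hdel].
exists (2 / del); first by rewrite divr_ge0 // ltW.
move=> v; have [->|v0] := eqVneq v 0; first by rewrite f0 !normr0 mulr0.
have nv0 : 0 < `|v| by rewrite normr_gt0.
pose k := del / (2 * `|v|).
have k0 : 0 < k by rewrite divr_gt0 // mulr_gt0.
have : ball (0 : E) del (k *: v).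
  rewrite -ball_normE /ball_ /= sub0r normrN normrZ gtr0_norm //.
  have -> : k * `|v| = del / 2.
    by rewrite /k invfM mulrA -mulrA mulVf ?gt_eqF // mulr1.
  by rewrite ltr_pdivrMr // ltr_pMr // ltr1n.
move=> /hdel /=; rewrite f0 sub0r normrN fs normrM gtr0_norm // => h.
have -> : 2 / del * `|v| = k^-1 by rewrite /k invf_div mulrAC.
by rewrite -(ler_pM2l k0) mulfV ?gt_eqF // ltW.
Qed.

Lemma ball_convex (C : set E) (a : E) r : convex_subset C ->
  convex_subset (C `&` [set y | `|a - y| <= r]).
Proof.
move=> cC x y [Cx hx] [Cy hy] t ht; split; first exact: cC.
move/andP: ht => [t0 t1].
have ea : a = t *: a + (1 - t) *: a by rewrite -scalerDl addrC subrK scale1r.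
rewrite /= [X in X - _]ea.
have -> : t *: a + (1 - t) *: a - (t *: x + (1 - t) *: y) =
  t *: (a - x) + (1 - t) *: (a - y) by rewrite !scalerBr opprD addrACA.
apply: le_trans (ler_normD _ _) _; rewrite !normrZ !ger0_norm ?subr_ge0 //.
have : t * `|a - x| <= t * r by rewrite ler_wpM2l.
have : (1 - t) * `|a - y| <= (1 - t) * r by rewrite ler_wpM2l // subr_ge0.
lra.
Qed.

Lemma nearest_uniq (C : set E) (a : E) d z w : strictly_convex_space (E := E) ->
  convex_subset C -> (forall y, C y -> d <= `|a - y|) -> C z -> C w ->
  `|a - z| <= d -> `|a - w| <= d -> z = w.
Proof.
move=> sc cC dle Cz Cw hz hw.
have d0 : 0 <= d by apply: le_trans hz.
have [dz|dpos] := eqVneq d 0.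
  move: hz hw; rewrite dz !normr_le0 !subr_eq0 => /eqP <- /eqP <-; done.
have dp : 0 < d by rewrite lt_neqAle eq_sym dpos.
have ez : `|a - z| = d by apply/eqP; rewrite eq_le hz dle.
have ew : `|a - w| = d by apply/eqP; rewrite eq_le hw dle.
apply: contrapT => nzw.
pose h : R := 2%:R^-1.
have h1 : 1 - h = h by rewrite /h {1}(splitr 1) mul1r addrK.
have h0 : 0 <= h <= 1.
  by rewrite /h invr_ge0 ler0n /= invf_le1 ?ler1n // ltr0n.
have Cm := cC z w Cz Cw h h0.
have := dle _ Cm.
have ea : a = h *: a + h *: a by rewrite -scalerDl -[h in h + _]h1 subrK scale1r.
have -> : a - (h *: z + (1 - h) *: w) = d *: (h *: (d^-1 *: (a - z) + d^-1 *: (a - w))).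
  have dd (v : E) : d *: (d^-1 *: v) = v by rewrite scalerA mulfV ?gt_eqF // scale1r.
  rewrite h1 {1}ea opprD addrACA -!scalerBr -scalerDr -scalerDr scalerA.
  by rewrite [d * h]mulrC -scalerA dd.
rewrite normrZ gtr0_norm //.
have := sc (d^-1 *: (a - z)) (d^-1 *: (a - w)).
rewrite !normrZ gtr0_norm ?invr_gt0 // ez ew mulVf ?gt_eqF //.
have neq : d^-1 *: (a - z) <> d^-1 *: (a - w).
  move=> /(congr1 (fun v => d *: v)); rewrite !scalerA mulfV ?gt_eqF // !scale1r.
  by move=> /addrI /oppr_inj.
move=> /(_ erefl erefl neq) lt1 le1.
move: lt1; rewrite -(ltr_pM2l dp) mulr1 => lt1.
move: le1 lt1; lra.
Qed.
End Main.
Unset Implicit Arguments.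
Theorem lemma3p1 (R : realType) (E : completeNormedModType R)
  (S : Type) (op : S -> S -> S) (C : set E) (T : S -> E -> E) :
  strictly_convex_space (E := E) -> reflexive_space (E := E) ->
  C !=set0 -> closed C -> convex_subset C ->
  semigroup_op op -> representation op C T ->
  attractive_points C T !=set0 -> common_fixed_points C T !=set0.
Proof.
move=> sc refl [c0 Cc0] clC cC _ [Tinv Tcomp] [a ha].
pose D := [set `|a - y| | y in C].
pose d := inf D.
have Dlb : forall t, D t -> 0 <= t by move=> _ [y _ <-].
have Dne : D !=set0 by exists `|a - c0|, c0.
have dle y : C y -> d <= `|a - y| by move=> Cy; apply: (infL Dlb); exists y.
have d0 : 0 <= d by apply: infG.
have hx : forall n : nat, exists y, C y /\ `|a - y| < d + n.+1%:R^-1.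
  move=> n; have np : 0 < (n.+1%:R : R)^-1 by rewrite invr_gt0 ltr0Sn.
  by have [_ [y Cy <-] h] := infA np Dne Dlb; exists y.
have [x hxn] := choice hx.
pose M := `|a| + d + 1.
have xM n : `|x n| <= M.
  have [Cx h] := hxn n.
  have : `|x n| <= `|a| + `|a - x n|.
    have e : a - (a - x n) = x n by rewrite opprB addrC subrK.
    by have := ler_normB a (a - x n); rewrite e.
  have : (n.+1%:R : R)^-1 <= 1 by rewrite invf_le1 // ler1n.
  move=> h1 h2; apply: le_trans h2 _; rewrite /M -addrA lerD2l.
  by apply: ltW (lt_le_trans h _); rewrite lerD2l.
have [U [UU sU]] := @ultraFilterLemma nat \oo _.
have UF : ProperFilter U by apply: ultra_proper.
pose Phi (f : E -> R) := ulim U (fun n => f (x n)).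
have fxb f : dual_elt f -> exists B, forall n, `|f (x n)| <= B.
  move=> /dual_bounded [c c0' hc]; exists (c * M) => n.
  by apply: le_trans (hc _) _; rewrite ler_wpM2l.
have bid : bidual_elt Phi.
  split.
  - move=> f g hf hg; have [B1 h1] := fxb f hf; have [B2 h2] := fxb g hg.
    exact: (ulimD UU h1 h2).
  - move=> t f hf; have [B h] := fxb f hf; exact: (ulimZ UU _ h).
  - exists M => f c hf c0' hc; rewrite mulrC; apply: (ulim_abs UU) => n.
    by apply: le_trans (hc _) _; rewrite ler_wpM2l.
have [z hz] := refl Phi bid.
have key r : d < r -> C z /\ `|a - z| <= r.
  move=> dr; apply: contrapT => nK.
  pose K := C `&` [set y | `|a - y| <= r].
  have r0 : 0 < r by apply: le_lt_trans dr.
  have clK : closed K.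
    apply: closedI => //; have := @closed_ball_closed R E a r.
    by rewrite closed_ballE.
  have [N hN] := ltr_add_invr dr.
  have KxN n : (N <= n)%N -> K (x n).
    move=> Nn; have [Cx h] := hxn n; split => //=.
    have : (n.+1%:R : R)^-1 <= N.+1%:R^-1 by rewrite lef_pV2 ?posrE // ler_nat.
    move=> hle; apply: ltW; apply: le_lt_trans hN; apply: ltW (lt_le_trans h _).
    by rewrite lerD2l.
  have [f [hf [g [gf hg]]]] := separation (@ball_convex R E C a r cC) clK (KxN N (leqnn N)) nK.
  have [B hB] := fxb f hf.
  have : Phi f <= g.
    apply: (ulim_le UU hB); apply: sU; exists N => // n /= Nn; apply: hg; exact: KxN.
  rewrite hz //; lra.
have d1 : d < d + 1 by rewrite ltrDl.
have [Cz _] := key (d + 1) d1.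
have az : `|a - z| <= d.
  by apply/ler_addgt0Pr => e e0; apply: (key _ _).2; rewrite ltrDl.
exists z; split => // s.
apply: (nearest_uniq sc cC dle (Tinv s z Cz) Cz _ az).
exact: le_trans (ha z s Cz) az.
Qed.
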